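(* Let $G$ be a split graph with vertex partition $\{X,Y\}$, where $X=\{v_1,\ldots,v_n\}$ is a maximal clique of $G$ and $Y=V(G)\setminus X$ is a stable set, and write $d_i=|N_G(v_i)\cap Y|$, with $d_1\ge\cdots\ge d_n$ and $n\ge 2$. Then $\chi'_{\rm irr}(G)=1$ (i.e., $G$ itself is locally irregular) if and only if $d_1>d_2>\cdots>d_n$.
   Context: All graphs are finite and simple. A graph is locally irregular if any two adjacent vertices have distinct degrees. For a graph admitting a decomposition into locally irregular subgraphs (edge sets partitioning $E(G)$), $\chi'_{\rm irr}(G)$ is the minimum number of subgraphs in such a decomposition. *)

(* Defs.v *)
From mathcomp Require Import all_boot.
Set Implicit Arguments. Unset Strict Implicit. Unset Printing Implicit Defensive.

Definition simple_graph (T : finType) (e : rel T) : Prop :=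
  symmetric e /\ irreflexive e.

Definition deg (T : finType) (f : rel T) (x : T) : nat := #|[set y | f x y]|.

Definition locally_irregular (T : finType) (f : rel T) : Prop :=
  forall x y, f x y -> deg f x != deg f y.

Definition colour_class (T : finType) (e : rel T) (c : T -> T -> nat) (i : nat)
  : rel T := fun x y => e x y && (c x y == i).

(* A decomposition of E(G) into k locally irregular subgraphs, given as an
   edge colouring c with colours 0..k-1 (c is symmetric on edges); the edge
   sets of the k colour classes partition E(G). *)
Definition irr_decomposition (T : finType) (e : rel T) (k : nat)
  (c : T -> T -> nat) : Prop :=
  (forall x y, e x y -> c x y < k /\ c x y = c y x) /\
  (forall i, i < k -> locally_irregular (colour_class e c i)).

Definition irr_decomposable (T : finType) (e : rel T) (k : nat) : Prop :=
  exists c, irr_decomposition e k c.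

Definition chi_irr_is (T : finType) (e : rel T) (k : nat) : Prop :=
  irr_decomposable e k /\ (forall j, j < k -> ~ irr_decomposable e j).

Definition is_clique (T : finType) (e : rel T) (A : {set T}) : Prop :=
  forall x y, x \in A -> y \in A -> x != y -> e x y.
Definition is_stable (T : finType) (e : rel T) (A : {set T}) : Prop :=
  forall x y, x \in A -> y \in A -> ~~ e x y.
Definition is_maximal_clique (T : finType) (e : rel T) (A : {set T}) : Prop :=
  is_clique e A /\
  (forall B : {set T}, A \proper B -> ~ is_clique e B).

(* Main.v *)
Require Import Defs.
From mathcomp Require Import all_boot.
From mathcomp Require Import zify.

Lemma chi1_iff (T : finType) (e : rel T) (a b : T) :
  e a b -> (chi_irr_is e 1 <-> locally_irregular e).
Proof.
move=> eab; split.
- case=> [[c [Hc Hl]] _] x y exy.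
  have := Hl 0 isT x y.
  have E : forall z, deg (colour_class e c 0) z = deg e z.
    move=> z; rewrite /deg; apply: eq_card => w; rewrite !inE /colour_class.
    case ewz: (e z w) => //=; have [h _] := Hc _ _ ewz; by case: (c z w) h.
  rewrite !E; apply; rewrite /colour_class exy /=.
  have [h _] := Hc _ _ exy; by case: (c x y) h.
- move=> LI; split.
  + exists (fun _ _ => 0); split; first by [].
    move=> i; case: i => // _ x y; rewrite /colour_class /= andbT => exy.
    have E : forall z, deg (fun x y => e x y && true) z = deg e z.
      move=> z; rewrite /deg; apply: eq_card => w; by rewrite !inE andbT.
    by rewrite !E; apply: LI.
  + move=> j; case: j => // _ [c [Hc _]]; have [h _] := Hc _ _ eab; by [].
Qed.

Theorem fact1p2 (T : finType) (e : rel T) (n : nat) (X : {set T})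
  (v : 'I_n -> T) :
  simple_graph e ->
  is_maximal_clique e X ->
  is_stable e (~: X) ->
  injective v ->
  X = [set v i | i : 'I_n] ->
  2 <= n ->
  (forall i j : 'I_n, i <= j ->
     #|[set y in ~: X | e (v j) y]| <= #|[set y in ~: X | e (v i) y]|) ->
  (chi_irr_is e 1 <->
   (forall i j : 'I_n, i < j ->
     #|[set y in ~: X | e (v j) y]| < #|[set y in ~: X | e (v i) y]|)).
Proof.
move=> [esym eirr] [Xcl Xmax] Ys vinj Xdef n2 mono.
set d := fun i => #|[set y in ~: X | e (v i) y]|.
have vX : forall i, v i \in X by move=> i; rewrite Xdef imset_f.
have degv : forall i, deg e (v i) = (#|X|).-1 + d i.
  move=> i; rewrite /deg -(cardsID X [set y | e (v i) y]).
  have -> : [set y | e (v i) y] :&: X = X :\ v i.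
    apply/setP => y; rewrite !inE.
    case: (eqVneq y (v i)) => [->|ne] /=; first by rewrite eirr.
    case yX: (y \in X); last by rewrite andbF.
    by rewrite andbT (Xcl _ _ (vX i) yX) // eq_sym.
  have -> : [set y | e (v i) y] :\: X = [set y in ~: X | e (v i) y].
    by apply/setP => y; rewrite !inE andbC.
  by rewrite (cardsD1 (v i) X) vX.
have degy : forall y, y \notin X -> deg e y < #|X|.
  move=> y yX; rewrite /deg; apply: proper_card.
  have sub : [set x | e y x] \subset X.
    apply/subsetP => x; rewrite inE => exy; apply/negPn/negP => xX.
    by move: (Ys y x); rewrite !inE yX xX exy => /(_ isT isT).
  rewrite properEneq sub andbT; apply/negP => /eqP EX.
  apply: (Xmax (y |: X)).
    by apply: properUr; rewrite sub1set.
  move=> a b; rewrite !inE => /orP[/eqP->|aX] /orP[/eqP->|bX] ab.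
  - by rewrite eqxx in ab.
  - by move: bX; rewrite -EX inE.
  - by rewrite esym; move: aX; rewrite -EX inE.
  - exact: (Xcl).
have i0 : 0 < n by apply: leq_trans n2.
have eab : e (v (Ordinal i0)) (v (Ordinal n2)).
  apply: (Xcl); rewrite ?vX //; apply/negP => /eqP /vinj /(congr1 val) /= h; by [].
rewrite (@chi1_iff _ _ _ _ eab); split.
- move=> LI i j ij.
  have nij : v i != v j.
    by apply/negP => /eqP /vinj eq; rewrite eq ltnn in ij.
  have := LI _ _ (Xcl _ _ (vX i) (vX j) nij).
  rewrite !degv => /eqP ne.
  have := mono i j (ltnW ij); rewrite -/(d i) -/(d j) => h.
  lia.
- move=> strict x y exy.
  have dpos : forall i y, y \notin X -> e (v i) y -> 0 < d i.
    move=> i z zX ez; apply/card_gt0P; exists z; by rewrite !inE zX ez.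
  case xX: (x \in X); case yX: (y \in X).
  + move: exy xX yX; rewrite Xdef => exy /imsetP [i _ xi] /imsetP [j _ yj]; subst x y.
    rewrite !degv.
    case: (ltngtP i j) => [ij|ji|/val_inj E].
    * have := strict i j ij; rewrite -/(d i) -/(d j); lia.
    * have := strict j i ji; rewrite -/(d i) -/(d j); lia.
    * by move: exy; rewrite E (eirr (v j)).
  + move: xX; rewrite Xdef => /imsetP [i _ xe]; subst x.
    have := degy y (negbT yX); rewrite degv; have := dpos i y (negbT yX) exy; lia.
  + move: yX; rewrite Xdef => /imsetP [i _ ye]; subst y.
    rewrite esym in exy.
    have := degy x (negbT xX); rewrite degv; have := dpos i x (negbT xX) exy; lia.
  + by move: (Ys x y); rewrite !inE xX yX exy => /(_ isT isT).
Qed.
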